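(* Let $SC_2(x)=\sum_{n\ge0} sc_2(\mathcal{D}_n)x^n$, where $sc_2(\mathcal{D}_n)$ is the number of saturated chains of length 2 in the Dyck lattice $\mathcal{D}_n$. Then $$ SC_2(x)=\sum_{n\ge0}\Big(\sum_{\gamma\in\mathcal{D}_n}\big(2\cdot\#(du,du)_\gamma+\#(ddu)_\gamma+\#(duu)_\gamma\big)\Big)x^n . $$
   Context: A Dyck path of semilength $n$ is a lattice path from $(0,0)$ to $(2n,0)$ with steps $u=(1,1)$ and $d=(1,-1)$ never going below the $x$-axis, identified with a word over $\{u,d\}$. $\mathcal{D}_n$ is the set of Dyck paths of semilength $n$ ordered by containment: $\gamma\le\gamma'$ iff $\gamma$ lies weakly below $\gamma'$. A saturated chain of length $h$ is a sequence $\gamma^{(0)}<\cdots<\gamma^{(h)}$ in which each element covers the previous one. For words $\gamma_1,\ldots,\gamma_k$, $\#(\gamma_1,\ldots,\gamma_k)_\gamma$ denotes the number of sets of pairwise disjoint (non-overlapping) occurrences of the factors $\gamma_1,\ldots,\gamma_k$ in $\gamma$; thus $\#(du,du)_\gamma$ is the number of unordered pairs of distinct valleys of $\gamma$, and $\#(ddu)_\gamma$, $\#(duu)_\gamma$ are the numbers of occurrences of the factors $ddu$, $duu$ in $\gamma$. *)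

(* Defs.v *)
(* Dyck paths as words over bool: true = u = (1,1), false = d = (1,-1). *)
From mathcomp Require Import all_boot all_algebra.
Set Implicit Arguments. Unset Strict Implicit. Unset Printing Implicit Defensive.
Import GRing.Theory Num.Theory.
Local Open Scope ring_scope.

Definition u_step : bool := true.
Definition d_step : bool := false.

Definition step (b : bool) : int := if b then 1 else -1.

Definition height (s : seq bool) (i : nat) : int := \sum_(x <- take i s) step x.

Definition is_dyck (n : nat) (s : seq bool) : bool :=
  [&& size s == n.*2,
      all (fun i => 0 <= height s i) (iota 0 (n.*2).+1)
    & height s n.*2 == 0].

Definition Dn (n : nat) : {set (n.*2).-tuple bool} :=
  [set g : (n.*2).-tuple bool | is_dyck n g].

Definition dyck_le (s t : seq bool) : bool :=
  all (fun i => height s i <= height t i) (iota 0 (size s).+1).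

Definition dyck_lt (s t : seq bool) : bool := dyck_le s t && (s != t).

Definition dcovers (n : nat) (a b : (n.*2).-tuple bool) : bool :=
  [&& a \in Dn n, b \in Dn n, dyck_lt a b &
      [forall c in Dn n, ~~ (dyck_lt a c && dyck_lt c b)]].

Definition sc2 (n : nat) : nat :=
  #|[set abc : (n.*2).-tuple bool * (n.*2).-tuple bool * (n.*2).-tuple bool |
      dcovers abc.1.1 abc.1.2 && dcovers abc.1.2 abc.2]|.

Definition occ_at (w s : seq bool) (i : nat) : bool :=
  take (size w) (drop i s) == w.

Definition nocc (w s : seq bool) : nat := count (occ_at w s) (iota 0 (size s)).

Definition nocc2 (w s : seq bool) : nat :=
  (\sum_(i <- iota 0 (size s)) \sum_(j <- iota 0 (size s))
     [&& occ_at w s i, occ_at w s j & i + size w <= j])%N.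

(* Main.v *)
Require Import Defs.
From mathcomp Require Import all_boot all_algebra zify.
Set Implicit Arguments. Unset Strict Implicit. Unset Printing Implicit Defensive.

Definition P (s : seq bool) (k : nat) : nat := \sum_(j < k) nth false s j.

Lemma PS s k : P s k.+1 = P s k + nth false s k.
Proof. by rewrite /P big_ord_recr. Qed.

Lemma count_take_P s k : count id (take k s) = P s k.
Proof.
elim: s k => [|x s IH] [|k] //=; rewrite /P ?big_ord0 //.
  by rewrite big1 // => j _; rewrite nth_nil.
by rewrite big_ord_recl /= IH.
Qed.

Lemma sum_step l : (\sum_(x <- l) step x = (2 * count id l)%:Z - (size l)%:Z)%R.
Proof.
elim: l => [|x l IH]; first by rewrite big_nil.
rewrite big_cons IH /=; case: x => /=; rewrite /step; lia.
Qed.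

Lemma height_P s k : k <= size s -> height s k = ((2 * P s k)%:Z - k%:Z)%R.
Proof.
move=> hk; by rewrite /height sum_step count_take_P size_takel.
Qed.

Lemma Dn_P n (g : (n.*2).-tuple bool) :
  g \in Dn n <-> (forall i, i <= n.*2 -> i <= 2 * P g i) /\ P g n.*2 = n.
Proof.
rewrite inE /is_dyck size_tuple eqxx andTb.
have sz : size g = n.*2 by rewrite size_tuple.
split.
  case/andP=> /seq.allP H /eqP H0; split.
    move=> i hi; have := H i; rewrite mem_iota /= add0n ltnS => /(_ hi).
    rewrite height_P ?sz //; lia.
  move: H0; rewrite height_P ?sz //; lia.
case=> H H0; apply/andP; split.
  apply/seq.allP=> i; rewrite mem_iota /= add0n ltnS => hi.
  rewrite height_P ?sz //; have := H i hi; lia.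
rewrite height_P ?sz //; apply/eqP; lia.
Qed.

Lemma le_P m (a b : seq bool) : size a = m -> size b = m ->
  dyck_le a b <-> forall i, i <= m -> P a i <= P b i.
Proof.
move=> sa sb; rewrite /dyck_le sa; split.
  move=> /seq.allP H i hi; have := H i; rewrite mem_iota /= add0n ltnS => /(_ hi).
  rewrite !height_P ?sa ?sb //; lia.
move=> H; apply/seq.allP=> i; rewrite mem_iota /= add0n ltnS => hi.
rewrite !height_P ?sa ?sb //; have := H i hi; lia.
Qed.

Lemma eq_P (a b : seq bool) : size a = size b ->
  (forall i, i <= size a -> P a i = P b i) -> a = b.
Proof.
move=> sab H; apply: (eq_from_nth (x0 := false)) => // j hj.
have := H j.+1 hj; rewrite !PS H ?(ltnW hj) // => /addnI.
by case: (nth false a j); case: (nth false b j).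
Qed.

Definition flip (s : seq bool) (i : nat) : seq bool :=
  mkseq (fun k => if k == i then true else if k == i.+1 then false
                  else nth false s k) (size s).

Lemma size_flip s i : size (flip s i) = size s.
Proof. by rewrite size_mkseq. Qed.

Definition valley (s : seq bool) (i : nat) : bool :=
  [&& i.+1 < size s, ~~ nth false s i & nth false s i.+1].

Lemma nth_flip s i k : valley s i -> nth false (flip s i) k =
  if k == i then true else if k == i.+1 then false else nth false s k.
Proof.
case/and3P=> hi _ _; case: (ltnP k (size s)) => hk.
  by rewrite nth_mkseq.
rewrite !nth_default ?size_flip //.
have -> : (k == i) = false by apply/eqP; lia.
by have -> : (k == i.+1) = false by apply/eqP; lia.
Qed.

Lemma P_flip s i k : valley s i -> P (flip s i) k = P s k + (k == i.+1).
Proof.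
move=> v; have v' := v; case/and3P: v' => hi ha hb.
elim: k => [|k IH]; first by rewrite /P !big_ord0.
rewrite !PS IH nth_flip //.
case: (eqVneq k i) => [->|ki].
  by rewrite eqxx (negbTE ha) (_ : (i == i.+1) = false) ?addn0 ?addn1 // ; lia.
case: (eqVneq k i.+1) => [->|ki1].
  rewrite hb; have -> : (i.+2 == i.+1) = false by apply/eqP; lia.
  by rewrite addn0.
by rewrite eqSS (negbTE ki) !addn0.
Qed.

Lemma occ_size w s i : occ_at w s i -> 0 < size w -> i + size w <= size s.
Proof.
rewrite /occ_at => /eqP H w0; have := congr1 size H.
rewrite size_take size_drop; set S := size s; set W := size w.
case: ltnP => h; lia.
Qed.

Lemma occ_du s i : occ_at [:: d_step; u_step] s i = valley s i.
Proof.
rewrite /valley; case: (ltnP i.+1 (size s)) => h /=.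
  rewrite /occ_at /d_step /u_step (drop_nth false (n:=i)); last lia.
  rewrite (drop_nth false (n:=i.+1)) //=.
  by rewrite take0; case: (nth false s i) => //; case: (nth false s i.+1).
by apply/negP => /occ_size /(_ isT) /=; lia.
Qed.

Lemma occ_ddu s i : occ_at [:: d_step; d_step; u_step] s i =
  [&& i.+2 < size s, ~~ nth false s i, ~~ nth false s i.+1 & nth false s i.+2].
Proof.
case: (ltnP i.+2 (size s)) => h /=.
  rewrite /occ_at /d_step /u_step (drop_nth false (n:=i)); last lia.
  rewrite (drop_nth false (n:=i.+1)); last lia.
  rewrite (drop_nth false (n:=i.+2)) //= take0.
  by case: (nth false s i) => //; case: (nth false s i.+1) => //;
     case: (nth false s i.+2).
by apply/negP => /occ_size /(_ isT) /=; lia.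
Qed.

Lemma occ_duu s i : occ_at [:: d_step; u_step; u_step] s i =
  [&& i.+2 < size s, ~~ nth false s i, nth false s i.+1 & nth false s i.+2].
Proof.
case: (ltnP i.+2 (size s)) => h /=.
  rewrite /occ_at /d_step /u_step (drop_nth false (n:=i)); last lia.
  rewrite (drop_nth false (n:=i.+1)); last lia.
  rewrite (drop_nth false (n:=i.+2)) //= take0.
  by case: (nth false s i) => //; case: (nth false s i.+1) => //;
     case: (nth false s i.+2).
by apply/negP => /occ_size /(_ isT) /=; lia.
Qed.

Lemma size_flipT m (t : m.-tuple bool) i : size (flip t i) == m.
Proof. by rewrite size_flip size_tuple. Qed.

Definition flipT m (t : m.-tuple bool) i : m.-tuple bool := Tuple (size_flipT t i).

Lemma flipTE m (t : m.-tuple bool) i : val (flipT t i) = flip t i.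
Proof. by []. Qed.

Ltac gen_P := repeat match goal with
  | |- context [P ?s ?k] => let x := fresh "x" in set x := P s k in *; clearbody x
  | H : context [P ?s ?k] |- _ => let x := fresh "x" in set x := P s k in *; clearbody x
  end.
Ltac plia := gen_P; lia.

Lemma P0 s : P s 0 = 0.
Proof. by rewrite /P big_ord0. Qed.

Lemma L1 n (a : (n.*2).-tuple bool) i : a \in Dn n -> valley a i ->
  flipT a i \in Dn n /\ dcovers a (flipT a i).
Proof.
move=> aD v; have v' := v; case/and3P: v' => hi _ _.
rewrite size_tuple in hi.
have Pf k : P (flipT a i) k = P a k + (k == i.+1) by rewrite flipTE P_flip.
have fD : flipT a i \in Dn n.
  case/Dn_P: aD => H1 H2; apply/Dn_P; split.
    by move=> k hk; rewrite Pf; have := H1 k hk; lia.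
  by rewrite Pf H2 (_ : (n.*2 == i.+1) = false) ?addn0 //; apply/eqP; lia.
have sa : size a = n.*2 by rewrite size_tuple.
have sf : size (flipT a i) = n.*2 by rewrite size_tuple.
have lef : dyck_le a (flipT a i).
  by apply/(le_P sa sf) => k _; rewrite Pf leq_addr.
have neq : (a : seq bool) != flipT a i.
  apply/eqP => E; have := Pf i.+1; rewrite -E eqxx; lia.
split=> //; rewrite /dcovers aD fD /dyck_lt lef neq /=.
apply/forall_inP => c cD; apply/negP => /andP [/andP [le1 ne1] /andP [le2 ne2]].
have sc : size c = n.*2 by rewrite size_tuple.
move/(le_P sa sc): le1 => le1; move/(le_P sc sf): le2 => le2.
have [E|E] : P c i.+1 = P a i.+1 \/ P c i.+1 = P a i.+1 + 1.
  have := le1 i.+1 (ltnW hi); have := le2 i.+1 (ltnW hi); rewrite Pf eqxx; lia.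
- move/eqP: ne1; apply; apply: eq_P; first by rewrite sa sc.
  move=> k; rewrite sa => hk; have := le1 k hk; have := le2 k hk; rewrite Pf.
  case: (eqVneq k i.+1) => [->|ne]; first by rewrite E.
  rewrite /= addn0 => h1 h2; apply/eqP; by rewrite eqn_leq h1 h2.
- move/eqP: ne2; apply; apply: eq_P; first by rewrite sf sc.
  move=> k; rewrite sc => hk; have := le1 k hk; have := le2 k hk; rewrite Pf.
  case: (eqVneq k i.+1) => [->|ne]; first by rewrite E.
  rewrite /= addn0 => h1 h2; apply/eqP; by rewrite eqn_leq h1 h2.
Qed.

Lemma L2 n (a b : (n.*2).-tuple bool) : dcovers a b ->
  exists i, valley a i /\ b = flipT a i.
Proof.
case/and4P=> aD bD /andP [leab neab] cov.
have sa : size a = n.*2 by rewrite size_tuple.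
have sb : size b = n.*2 by rewrite size_tuple.
move/(le_P sa sb): leab => leab.
have [hex|nex] := boolP [exists k : 'I_(n.*2).+1, P a k < P b k]; last first.
  case/eqP: neab; apply: eq_P; first by rewrite sa sb.
  move=> k; rewrite sa => hk; have := leab k hk.
  move/existsPn: nex => /(_ (Ordinal (hk : k < (n.*2).+1))) /=; lia.
case/existsP: hex => k0 hk0.
case: (@arg_minnP _ k0 (fun k : 'I_(n.*2).+1 => P a k < P b k) (fun k : 'I_(n.*2).+1 => 2 * P a k + (n.*2 - k)) hk0) => j hj jmin.
have [Ha0 Ham] : P a 0 = 0 /\ P a n.*2 = n by split; [exact: P0 | case/Dn_P: aD].
have [Hb0 Hbm] : P b 0 = 0 /\ P b n.*2 = n by split; [exact: P0 | case/Dn_P: bD].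
have jm := ltn_ord j.
have j0 : (j : nat) <> 0 by move=> e; move: hj; rewrite e Ha0 Hb0.
have jm' : (j : nat) <> n.*2 by move=> e; move: hj; rewrite e Ham Hbm ltnn.
have bnd k : P b k.+1 <= P b k + 1 by rewrite PS leq_add2l leq_b1.
have vi : valley a j.-1.
  rewrite /valley sa; apply/and3P; split; first plia.
  - apply/negP => hn.
    have e1 : P a j = P a j.-1 + 1.
      by rewrite -[in LHS](prednK (n:=j)) ?PS ?hn //; plia.
    have e2 := bnd j.-1; rewrite prednK in e2; last plia.
    have hlt : j.-1 < n.*2.+1 by plia.
    have := jmin (Ordinal hlt); rewrite /= => /(_ ltac:(plia)); plia.
  - apply/negPn/negP => hn; rewrite prednK in hn; last plia.
    have e1 : P a j.+1 = P a j by rewrite PS (negbTE hn) addn0.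
    have e2 : P b j <= P b j.+1 by rewrite PS leq_addr.
    have hlt : j.+1 < n.*2.+1 by plia.
    have := jmin (Ordinal hlt); rewrite /= => /(_ ltac:(plia)); plia.
exists j.-1; split => //.
have [fD cf] := L1 aD vi.
case/and4P: cf => _ _ ltac _.
have sf : size (flipT a j.-1) = n.*2 by rewrite size_tuple.
have Pf k : P (flipT a j.-1) k = P a k + (k == j.-1.+1) by rewrite flipTE P_flip.
have lecb : dyck_le (flipT a j.-1) b.
  apply/(le_P sf sb) => k hk; rewrite Pf prednK; last plia.
  case: (eqVneq k j) => [->|_]; have := leab k hk; plia.
move/forall_inP: cov => /(_ _ fD); rewrite ltac /= /dyck_lt lecb /= negbK.
by move/eqP => e; apply: val_inj.
Qed.

Lemma flip_inj s i i' : valley s i -> valley s i' -> flip s i = flip s i' -> i = i'.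
Proof.
move=> vi vi' E; have := congr1 (fun t => nth false t i) E.
rewrite /= !nth_flip // eqxx.
case: (eqVneq i i') => // ne; case: (eqVneq i i'.+1) => // e.
by case/and3P: vi => _ /negbTE ->.
Qed.

Lemma K n (a : (n.*2).-tuple bool) (g : (n.*2).-tuple bool -> nat) :
  \sum_(b : (n.*2).-tuple bool) dcovers a b * g b =
  (a \in Dn n) * \sum_(i < n.*2) valley a i * g (flipT a i).
Proof.
case aD: (a \in Dn n); last first.
  by rewrite mul0n big1 // => b _; rewrite /dcovers aD.
rewrite mul1n.
transitivity (\sum_(i < n.*2) \sum_(b : (n.*2).-tuple bool)
                 (valley a i && (b == flipT a i)) * g b); last first.
  apply: eq_bigr => i _; rewrite (bigD1 (flipT a i)) //= eqxx andbT big1 ?addn0 //.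
  by move=> b /negbTE ->; rewrite andbF.
rewrite exchange_big; apply: eq_bigr => b _; rewrite -big_distrl /=; congr (_ * _).
case cab: (dcovers a b).
  case: (L2 cab) => i [vi eb].
  have hi : i < n.*2 by case/and3P: vi; rewrite size_tuple; lia.
  rewrite (bigD1 (Ordinal hi)) //= vi eb eqxx big1 // => i' ne.
  apply/eqP; rewrite eqb0; apply/negP => /andP [vi' /eqP e]; move/eqP: ne; apply; apply: val_inj => /=.
  by apply: (flip_inj vi' vi); rewrite -!flipTE -e.
rewrite big1 // => i _; apply/eqP; rewrite eqb0; apply/negP => /andP [vi /eqP e].
by have := (L1 aD vi).2; rewrite -e cab.
Qed.

Lemma Vlem n (b : (n.*2).-tuple bool) :
  \sum_(c : (n.*2).-tuple bool) dcovers b c =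
  (b \in Dn n) * \sum_(j < n.*2) valley b j.
Proof.
have := K b (fun _ => 1); rewrite /=.
under eq_bigr do rewrite muln1.
by under [in X in _ = X -> _]eq_bigr do rewrite muln1.
Qed.

Definition Vs (s : seq bool) (m : nat) := \sum_(j < m) valley s j.

Lemma Loc s i j : valley s i ->
  valley (flip s i) j + (j == i) = valley s j + ((j.+1 == i) && ~~ nth false s j)
   + ((j == i.+1) && (j.+1 < size s) && nth false s j.+1).
Proof.
move=> v; have v' := v; case/and3P: v' => hi ha hb.
rewrite /valley size_flip !(nth_flip _ v).
case: (eqVneq j i) => [->|nji].
  have n1 : (i.+1 == i) = false by apply/eqP; lia.
  have n2 : (i == i.+1) = false by apply/eqP; lia.
  by rewrite n1 n2 eqxx hi ha hb.
case: (eqVneq j.+1 i) => [e|n3].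
  subst i; have n2 : (j == j.+2) = false by apply/eqP; lia.
  rewrite n2 (negbTE ha) (ltnW hi) /=.
  by case: (nth false s j).
case: (eqVneq j i.+1) => [e|n4].
  subst j; have n1 : (i.+2 == i) = false by apply/eqP; lia.
  have n2 : (i.+2 == i.+1) = false by apply/eqP; lia.
  rewrite n2 hb /=.
  by case: (i.+2 < size s); case: (nth false s i.+2).
have -> : (j.+1 == i.+1) = false by rewrite eqSS (negbTE nji).
by rewrite /= !addn0.
Qed.


Lemma collapse m k (F : nat -> nat) :
  \sum_(i < m) ((i : nat) == k) * F i = (k < m) * F k.
Proof.
case: (ltnP k m) => hk.
  rewrite (bigD1 (Ordinal hk)) //= eqxx mul1n big1 ?addn0 // => i ne.
  have -> : (i == k :> nat) = false.
    by apply/negbTE; apply: contra ne => /eqP e; apply/eqP/val_inj.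
  by rewrite mul0n.
rewrite mul0n big1 // => i _.
have -> : (i == k :> nat) = false by apply/eqP; have := ltn_ord i; lia.
by rewrite mul0n.
Qed.

Lemma count_iota_sum (p : pred nat) m : count p (iota 0 m) = \sum_(i < m) p i.
Proof.
elim: m => [|m IH]; first by rewrite big_ord0.
have -> : iota 0 m.+1 = iota 0 m ++ [:: m] by rewrite -addn1 iotaD.
rewrite big_ord_recr /= -IH count_cat /=; by case: (p m).
Qed.

Lemma sum_iota (F : nat -> nat) m : \sum_(i <- iota 0 m) F i = \sum_(i < m) F i.
Proof. by rewrite -(big_mkord xpredT) /index_iota subn0. Qed.

Lemma Qterm s i j :
  valley s i * valley s j = (i == j) * valley s i
    + [&& valley s i, valley s j & i + 2 <= j] + [&& valley s j, valley s i & j + 2 <= i].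
Proof.
case: (eqVneq i j) => [<-|ne].
  case: (valley s i) => //=; rewrite ?andbF //.
  by have -> : (i + 2 <= i) = false by apply/negbTE; lia.
rewrite mul0n add0n.
case vi: (valley s i); case vj: (valley s j) => //=.
have key : (i + 2 <= j) || (j + 2 <= i).
  case/and3P: vi => _ a1 a2; case/and3P: vj => _ b1 b2.
  case: (eqVneq j i.+1) => [e|n1]; first by subst j; rewrite a2 in b1.
  case: (eqVneq i j.+1) => [e|n2]; first by subst i; rewrite b2 in a1.
  apply/orP; lia.
case/orP: key => h; rewrite h.
  by have -> : (j + 2 <= i) = false by apply/negbTE; lia.
by have -> : (i + 2 <= j) = false by apply/negbTE; lia.
Qed.

Lemma Ccount (s : seq bool) :
  \sum_(i < size s) valley s i * Vs (flip s i) (size s) =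
  2 * nocc2 [:: d_step; u_step] s + nocc [:: d_step; d_step; u_step] s
  + nocc [:: d_step; u_step; u_step] s.
Proof.
have H1 : forall i : 'I_(size s), valley s i * Vs (flip s i) (size s) + valley s i =
   \sum_(j < size s) valley s i * (valley s j + ((j.+1 == i) && ~~ nth false s j)
      + (((j : nat) == i.+1) && (j.+1 < size s) && nth false s j.+1)).
  move=> i; case vi: (valley s i); last by rewrite mul0n big1 // => j _; rewrite mul0n.
  rewrite !mul1n; under eq_bigr do rewrite mul1n.
  have Hc := collapse (size s) i (fun _ => 1); rewrite /= ltn_ord muln1 in Hc.
  rewrite /Vs -{1}Hc -big_split; apply: eq_bigr => j _; rewrite muln1; exact: (@Loc s i j vi).
have S1 : \sum_(i < size s) (valley s i * Vs (flip s i) (size s) + valley s i) =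
   \sum_(i < size s) \sum_(j < size s) valley s i * (valley s j + ((j.+1 == i) && ~~ nth false s j)
      + (((j : nat) == i.+1) && (j.+1 < size s) && nth false s j.+1)).
  by apply: eq_bigr => i _; exact: H1.
have EL : \sum_(i < size s) (valley s i * Vs (flip s i) (size s) + valley s i) =
   \sum_(i < size s) valley s i * Vs (flip s i) (size s) + \sum_(i < size s) (valley s i : nat).
  by rewrite big_split.
have ER : \sum_(i < size s) \sum_(j < size s) valley s i * (valley s j + ((j.+1 == i) && ~~ nth false s j)
      + (((j : nat) == i.+1) && (j.+1 < size s) && nth false s j.+1)) =
   \sum_(i < size s) \sum_(j < size s) valley s i * valley s j
   + \sum_(i < size s) \sum_(j < size s) valley s i * ((j.+1 == i) && ~~ nth false s j)
   + \sum_(i < size s) \sum_(j < size s) valley s i * (((j : nat) == i.+1) && (j.+1 < size s) && nth false s j.+1).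
  rewrite -!big_split; apply: eq_bigr => i _; rewrite -!big_split.
  by apply: eq_bigr => j _; rewrite !mulnDr.
have EQ : \sum_(i < size s) \sum_(j < size s) valley s i * valley s j =
   \sum_(i < size s) (valley s i : nat) + 2 * nocc2 [:: d_step; u_step] s.
  have N2 : nocc2 [:: d_step; u_step] s = \sum_(i < size s) \sum_(j < size s)
      [&& valley s i, valley s j & i + 2 <= j].
    rewrite /nocc2 sum_iota; apply: eq_bigr => i _; rewrite sum_iota.
    by apply: eq_bigr => j _; rewrite !occ_du.
  have A1 : \sum_(i < size s) \sum_(j < size s) ((i : nat) == j) * valley s i =
      \sum_(i < size s) (valley s i : nat).
    apply: eq_bigr => i _; have C := collapse (size s) i (fun _ => valley s i).
    rewrite /= ltn_ord mul1n in C; apply: (eq_trans _ C); apply: eq_bigr => j _; by rewrite eq_sym.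
  have A3 : \sum_(i < size s) \sum_(j < size s) [&& valley s j, valley s i & j + 2 <= i] =
      \sum_(i < size s) \sum_(j < size s) [&& valley s i, valley s j & i + 2 <= j].
    by rewrite exchange_big.
  have A0 : \sum_(i < size s) \sum_(j < size s) valley s i * valley s j =
      \sum_(i < size s) \sum_(j < size s) ((i : nat) == j) * valley s i
    + \sum_(i < size s) \sum_(j < size s) [&& valley s i, valley s j & i + 2 <= j]
    + \sum_(i < size s) \sum_(j < size s) [&& valley s j, valley s i & j + 2 <= i].
    rewrite -!big_split; apply: eq_bigr => i _; rewrite -!big_split.
    by apply: eq_bigr => j _; rewrite Qterm.
  lia.
have EX : \sum_(i < size s) \sum_(j < size s) valley s i * ((j.+1 == i) && ~~ nth false s j) =
   nocc [:: d_step; d_step; u_step] s.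
  rewrite /nocc count_iota_sum exchange_big; apply: eq_bigr => j _.
  transitivity (\sum_(i < size s) ((i : nat) == j.+1) * (valley s i * ~~ nth false s j)).
    apply: eq_bigr => i _; rewrite (eq_sym j.+1).
    by case: (_ == _); rewrite /= ?mul1n ?muln0 ?mul0n.
  have C := collapse (size s) j.+1 (fun i => valley s i * ~~ nth false s j).
  rewrite /= in C; rewrite C occ_ddu /valley.
  case h: (j.+2 < size s); last by case: (j.+1 < size s); rewrite /= ?mul0n ?muln0.
  rewrite (_ : j.+1 < size s) /=; last by apply: ltnW.
  by case: (nth false s j); case: (nth false s j.+1); case: (nth false s j.+2).
have EY : \sum_(i < size s) \sum_(j < size s) valley s i * (((j : nat) == i.+1) && (j.+1 < size s) && nth false s j.+1) = nocc [:: d_step; u_step; u_step] s.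
  rewrite /nocc count_iota_sum; apply: eq_bigr => i _.
  transitivity (\sum_(j < size s) ((j : nat) == i.+1) * (valley s i * ((j.+1 < size s) && nth false s j.+1))).
    apply: eq_bigr => j _.
    by case: (_ == _); rewrite /= ?mul1n ?muln0 ?mul0n.
  have C := collapse (size s) i.+1 (fun j => valley s i * ((j.+1 < size s) && nth false s j.+1)).
  rewrite /= in C; rewrite C occ_duu /valley.
  case h: (i.+2 < size s); last by case: (i.+1 < size s); rewrite /= ?mul0n ?muln0 ?andbF.
  rewrite (_ : i.+1 < size s) /=; last by apply: ltnW.
  by case: (nth false s i); case: (nth false s i.+1); case: (nth false s i.+2).
lia.
Qed.

Theorem mainTheorem2 : forall n : nat,
  sc2 n =
  (\sum_(g in Dn n)
     (2 * nocc2 [:: d_step; u_step] g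
      + nocc [:: d_step; d_step; u_step] g
      + nocc [:: d_step; u_step; u_step] g))%N.
Proof.
move=> n.
have -> : sc2 n = \sum_(a : (n.*2).-tuple bool) \sum_(b : (n.*2).-tuple bool)
    \sum_(c : (n.*2).-tuple bool) ((dcovers a b && dcovers b c) : nat).
  rewrite pair_bigA pair_bigA /sc2 -sum1_card big_mkcond /=.
  by apply: eq_bigr => p _; rewrite inE; case: ifP.
rewrite [in RHS]big_mkcond /=; apply: eq_bigr => a _.
under eq_bigr => b _ do under eq_bigr => c _ do rewrite -mulnb.
under eq_bigr => b _ do rewrite -big_distrr /= Vlem.
rewrite K; case aD: (a \in Dn n); rewrite ?mul0n // mul1n.
rewrite -Ccount size_tuple.
apply: eq_bigr => i _; case vi: (valley a i); rewrite ?mul0n // !mul1n.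
by rewrite (L1 aD vi).1 mul1n.
Qed.
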